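(* Let $X$ be a semigroup. If all idempotents of the semigroup $\beta(X)$ commute, then every cyclic subsemigroup of $X$ and every linear subsemigroup of $X$ is finite.
   Context: $\beta(X)$ is the set of all ultrafilters on $X$, with each $x\in X$ identified with the principal ultrafilter $\langle x\rangle=\{A\subset X:x\in A\}$, endowed with the operation $\mathcal A*\mathcal B=\big\langle \bigcup_{a\in A} a*B_a : A\in\mathcal A,\ \{B_a\}_{a\in A}\subset\mathcal B\big\rangle$, where $\langle\mathcal C\rangle=\{A\subset X:\exists C\in\mathcal C,\ C\subset A\}$ (this makes $\beta(X)$ a semigroup). A semigroup $S$ is cyclic if $S=\{x^n:n\in\mathbb N\}$ for some $x\in S$; linear if $xy\in\{x,y\}$ for all $x,y\in S$. *)

(* Defs.v *)
From Stdlib Require Import List.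

Section BetaDefs.
Context {X : Type} (op : X -> X -> X).

Definition associative_op : Prop :=
  forall x y z : X, op x (op y z) = op (op x y) z.

Definition finite_set (S : X -> Prop) : Prop :=
  exists l : list X, forall x, S x -> In x l.

Definition subsemigroup (S : X -> Prop) : Prop :=
  forall x y, S x -> S y -> S (op x y).

(* npow x n = x^(n+1), i.e. the positive powers x, x^2, x^3, ... *)
Fixpoint npow (x : X) (n : nat) : X :=
  match n with
  | O => x
  | S k => op (npow x k) x
  end.

Definition cyclic_set (S : X -> Prop) : Prop :=
  exists x, S x /\ forall y, S y <-> exists n, y = npow x n.

Definition linear_set (S : X -> Prop) : Prop :=
  forall x y, S x -> S y -> op x y = x \/ op x y = y.

Definition is_ultrafilter (F : (X -> Prop) -> Prop) : Prop :=
  F (fun _ => True) /\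
  ~ F (fun _ => False) /\
  (forall A B : X -> Prop, F A -> (forall x, A x -> B x) -> F B) /\
  (forall A B : X -> Prop, F A -> F B -> F (fun x => A x /\ B x)) /\
  (forall A : X -> Prop, F A \/ F (fun x => ~ A x)).

(* The operation on beta(X):
   A * B = < { U_{a in A} a*B_a : A in A, (B_a)_{a in A} in B } >. *)
Definition beta_op (F G : (X -> Prop) -> Prop) : (X -> Prop) -> Prop :=
  fun S => exists (A : X -> Prop) (Bf : X -> X -> Prop),
      F A /\ (forall a, A a -> G (Bf a)) /\
      (forall a b, A a -> Bf a b -> S (op a b)).

Definition beta_idempotent (F : (X -> Prop) -> Prop) : Prop :=
  is_ultrafilter F /\ forall S, beta_op F F S <-> F S.

Definition beta_commute (F G : (X -> Prop) -> Prop) : Prop :=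
  forall S, beta_op F G S <-> beta_op G F S.

End BetaDefs.

(* Main.v *)
Require Import Defs.
From Stdlib Require Import List.
From mathcomp Require classical_sets filter.
From Stdlib Require Import Classical FunctionalExtensionality PropExtensionality Arith Lia.

Lemma uf_lemma (X : Type) (F : (X -> Prop) -> Prop) :
  F (fun _ => True) -> ~ F (fun _ => False) ->
  (forall A B : X -> Prop, F A -> (forall x, A x -> B x) -> F B) ->
  (forall A B : X -> Prop, F A -> F B -> F (fun x => A x /\ B x)) ->
  exists u, is_ultrafilter u /\ (forall A, F A -> u A).
Proof.
intros FT F0 FS FI.
assert (PF : filter.ProperFilter F).
{ constructor. exact F0. constructor; [exact FT | intros A B; apply FI | intros A B AB FA; exact (FS A B FA AB)]. }
destruct (filter.ultraFilterLemma PF) as [G [UG FG]].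
exists G; split; [|exact FG].
pose proof (@filter.ultra_proper _ _ UG) as PG.
pose proof (@filter.filter_filter _ _ PG) as FFG.
split; [exact (@filter.filterT _ _ FFG)|].
split; [exact (@filter.filter_not_empty _ _ PG)|].
split; [intros A B GA AB; exact (@filter.filterS _ _ FFG A B AB GA)|].
split; [intros A B GA GB; exact (@filter.filterI _ _ FFG A B GA GB)|].
intros A; exact (filter.in_ultra_setVsetC A UG).
Qed.

Lemma zorn_fam (T : Type) (P : (T -> Prop) -> Prop) :
  (forall F : (T -> Prop) -> Prop, (forall A, F A -> P A) ->
     (forall A B, F A -> F B -> (forall x, A x -> B x) \/ (forall x, B x -> A x)) ->
     P (fun x => exists A, F A /\ A x)) ->
  exists A, P A /\ forall B, P B -> (forall x, A x -> B x) -> forall x, B x -> A x.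
Proof.
intros H.
destruct (@classical_sets.Zorn_bigcup T P) as [A [PA HA]].
- intros F FP Ftot.
  assert (E : classical_sets.bigcup F (fun X => X) = (fun x => exists A, F A /\ A x)).
  { apply functional_extensionality; intro x; apply propositional_extensionality.
    split; [intros [i Fi ix]; eauto | intros [i [Fi ix]]; exists i; auto]. }
  rewrite E. apply H; [exact FP|].
  intros A B FA FB. destruct (Ftot A B FA FB); auto.
- exists A; split; [exact PA|].
  intros B PB AB x Bx. apply NNPP; intro nAx.
  apply (HA B); [|exact PB]. split; [exact AB|].
  intro BA. apply nAx, BA, Bx.
Qed.
Section Alg.
Variable X : Type.
Variable op : X -> X -> X.
Hypothesis Hassoc : associative_op op.

Definition UF (u : (X -> Prop) -> Prop) := is_ultrafilter u.
Definition mult (u v : (X -> Prop) -> Prop) : (X -> Prop) -> Prop :=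
  fun S => u (fun a => v (fun b => S (op a b))).

Lemma uf_T u : UF u -> u (fun _ => True). Proof. intros H; apply H. Qed.
Lemma uf_F u : UF u -> ~ u (fun _ => False). Proof. intros H; apply H. Qed.
Lemma uf_up u A B : UF u -> u A -> (forall x, A x -> B x) -> u B.
Proof. intros H; apply H. Qed.
Lemma uf_and u A B : UF u -> u A -> u B -> u (fun x => A x /\ B x).
Proof. intros H; apply H. Qed.
Lemma uf_cases u A : UF u -> u A \/ u (fun x => ~ A x).
Proof. intros H; apply H. Qed.
Lemma uf_all u (B : X -> Prop) : UF u -> (forall x, B x) -> u B.
Proof. intros H HB. apply (uf_up u (fun _ => True)); auto. apply H. Qed.
Lemma uf_ne u A : UF u -> u A -> exists x, A x.
Proof. intros H HA. apply NNPP; intro N. apply (uf_F u H).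
  apply (uf_up u A); auto. intros x Ax; apply N; eauto. Qed.
Lemma uf_neg u A : UF u -> (u (fun x => ~ A x) <-> ~ u A).
Proof. intros H; split.
- intros Hn HA. destruct (uf_ne u _ H (uf_and u _ _ H HA Hn)) as [x [h1 h2]]; auto.
- intros Hn. destruct (uf_cases u A H); tauto. Qed.
Lemma uf_ext u (R A B : X -> Prop) : UF u -> u R -> (forall x, R x -> (A x <-> B x)) -> (u A <-> u B).
Proof. intros H HR E; split; intro HA; (eapply uf_up; [exact H| apply (uf_and u _ _ H HR HA)|]);
  intros x [r a]; apply (E x r); auto. Qed.
Lemma uf_const u (P : Prop) : UF u -> (u (fun _ => P) <-> P).
Proof. intros H; split.
- intros HP. destruct (uf_ne u _ H HP); auto.
- intros p. apply uf_all; auto. Qed.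
Lemma uf_eq u v : UF u -> UF v -> (forall S, u S -> v S) -> u = v.
Proof. intros Hu Hv E. apply functional_extensionality; intro S; apply propositional_extensionality.
split; [apply E|]. intros HvS. apply NNPP; intros N. apply (uf_neg u S Hu) in N.
apply E in N. apply (uf_neg v S Hv) in N. auto. Qed.

Lemma mult_uf u v : UF u -> UF v -> UF (mult u v).
Proof. intros Hu Hv. unfold mult. split; [|split; [|split; [|split]]].
- apply uf_all; auto. intros; apply uf_T, Hv.
- intros H. destruct (uf_ne u _ Hu H) as [a Ha]. exact (uf_F v Hv Ha).
- intros A B HA AB. eapply uf_up; [exact Hu| exact HA|]. intros a Ha.
  eapply uf_up; [exact Hv| exact Ha|]. auto.
- intros A B HA HB. eapply uf_up; [exact Hu| exact (uf_and u _ _ Hu HA HB)|].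
  intros a [h1 h2]. apply (uf_and v _ _ Hv h1 h2).
- intros A. destruct (uf_cases u (fun a => v (fun b => A (op a b))) Hu) as [h|h]; [left; exact h|right].
  eapply uf_up; [exact Hu|exact h|]. intros a Ha. apply (uf_neg v _ Hv). exact Ha.
Qed.

Lemma beta_mult u v S : UF u -> UF v -> (beta_op op u v S <-> mult u v S).
Proof. intros Hu Hv; split.
- intros [A [Bf [HA [HB HS]]]]. unfold mult. apply (uf_up u A); [exact Hu|exact HA|].
  intros a Aa. eapply uf_up; [exact Hv| exact (HB a Aa)|]. intros b; apply HS, Aa.
- intros H. exists (fun a => v (fun b => S (op a b))), (fun a b => S (op a b)).
  split; [exact H|split; auto].
Qed.

Lemma mult_assoc u v w : mult (mult u v) w = mult u (mult v w).
Proof. unfold mult. apply functional_extensionality; intro S. f_equal.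
apply functional_extensionality; intro a. f_equal.
apply functional_extensionality; intro b. f_equal.
apply functional_extensionality; intro c. rewrite Hassoc. reflexivity. Qed.

Definition pr (x : X) : (X -> Prop) -> Prop := fun A => A x.
Lemma pr_uf x : UF (pr x).
Proof. unfold pr; split; [|split; [|split; [|split]]]; auto. intros A; apply classic. Qed.

Definition Cl (G : (X -> Prop) -> Prop) u := UF u /\ forall S, G S -> u S.
Definition goodF (G : (X -> Prop) -> Prop) :=
  G (fun _ => True) /\ ~ G (fun _ => False) /\
  (forall A B : X -> Prop, G A -> (forall x, A x -> B x) -> G B) /\
  (forall A B : X -> Prop, G A -> G B -> G (fun x => A x /\ B x)) /\
  (forall u v, Cl G u -> Cl G v -> forall S, G S -> mult u v S).

Lemma goodF_ex G : goodF G -> exists u, Cl G u.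
Proof. intros [h1 [h2 [h3 [h4 _]]]]. destruct (uf_lemma X G h1 h2 h3 h4) as [u [Hu Hs]].
exists u; split; auto. Qed.

Lemma Cl_mult G u v : goodF G -> Cl G u -> Cl G v -> Cl G (mult u v).
Proof. intros HG Hu Hv. split; [apply mult_uf; [apply Hu|apply Hv]|]. apply HG; auto. Qed.

Definition D (p : (X -> Prop) -> Prop) (S : X -> Prop) : X -> Prop := fun a => p (fun b => S (op a b)).
Definition Hfam (F : (X -> Prop) -> Prop) p r : (X -> Prop) -> Prop :=
  fun T => exists F1 S, F F1 /\ r S /\ forall a, F1 a -> D p S a -> T a.

Lemma Hfam_filter F p r : goodF F -> UF p -> UF r ->
  Hfam F p r (fun _ => True) /\
  (forall A B : X -> Prop, Hfam F p r A -> (forall x, A x -> B x) -> Hfam F p r B) /\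
  (forall A B : X -> Prop, Hfam F p r A -> Hfam F p r B -> Hfam F p r (fun x => A x /\ B x)).
Proof. intros HF Hp Hr. split; [|split].
- exists (fun _ => True), (fun _ => True). split; [apply HF|split; [apply uf_T, Hr|auto]].
- intros A B [F1 [S [h1 [h2 h3]]]] AB. exists F1, S; split; [auto|split; auto].
- intros A B [F1 [S [h1 [h2 h3]]]] [F2 [S2 [g1 [g2 g3]]]].
  exists (fun x => F1 x /\ F2 x), (fun x => S x /\ S2 x). split; [apply HF; auto|split; [apply uf_and; auto|]].
  intros a [f1 f2] Hd. unfold D in Hd. split.
  + apply h3; auto. unfold D. eapply uf_up; [exact Hp|exact Hd|]. intros b [x y]; auto.
  + apply g3; auto. unfold D. eapply uf_up; [exact Hp|exact Hd|]. intros b [x y]; auto.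
Qed.

Lemma Hfam_Cl F p r u : goodF F -> UF p -> UF r -> Cl F u -> (forall S, r S -> u (D p S)) -> Cl (Hfam F p r) u.
Proof. intros HF Hp Hr [Hu HuF] HD. split; [exact Hu|]. intros T [F1 [S [h1 [h2 h3]]]].
eapply uf_up; [exact Hu| apply (uf_and u _ _ Hu (HuF _ h1) (HD _ h2))|]. intros a [x y]; auto. Qed.

Lemma Hfam_Cl_inv F p r u : goodF F -> UF p -> UF r -> Cl (Hfam F p r) u -> Cl F u /\ mult u p = r.
Proof. intros HF Hp Hr [Hu HH]. split; [split; [exact Hu|]|].
- intros S HS. apply HH. exists S, (fun _ => True). split; [auto|split; [apply uf_T, Hr|]].
  auto.
- symmetry. apply uf_eq; [exact Hr| apply mult_uf; auto|]. intros S HS. apply HH.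
  exists (fun _ => True), S. split; [apply HF|split; [exact HS|]]. auto.
Qed.

Lemma F_in_Hfam F p r : goodF F -> UF p -> UF r -> forall S, F S -> Hfam F p r S.
Proof. intros HF Hp Hr S HS. exists S, (fun _ => True). split; [auto|split; [apply uf_T, Hr|auto]]. Qed.

Definition Pg (F0 G : (X -> Prop) -> Prop) := goodF G /\ forall S, F0 S -> G S.

Lemma maximal_family F0 : goodF F0 ->
  exists F, Pg F0 F /\ forall G, Pg F0 G -> (forall S, F S -> G S) -> forall S, G S -> F S.
Proof.
intros H0.
destruct (zorn_fam (X -> Prop) (fun M => Pg F0 (fun S => M S \/ F0 S))) as [M [PM HM]].
- intros Fam HFam Htot. split; [|intros S HS; right; exact HS].
  destruct H0 as [a0 [b0 [c0 [d0 e0]]]].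
  split; [right; exact a0|split; [|split; [|split]]].
  + intros [[A [FA AF]]|h]; [|exact (b0 h)]. destruct (HFam A FA) as [[_ [h _]] _]. apply h. left; exact AF.
  + intros A B [[Φ [FΦ ΦA]]|h] AB.
    * destruct (HFam Φ FΦ) as [[_ [_ [h _]]] _].
      destruct (h A B (or_introl ΦA) AB) as [x|x]; [left; exists Φ; auto|right; auto].
    * right; eauto.
  + assert (Hin: forall Φ, Fam Φ -> forall A B, (Φ A \/ F0 A) -> (Φ B \/ F0 B) ->
       (exists A0, Fam A0 /\ A0 (fun x => A x /\ B x)) \/ F0 (fun x => A x /\ B x)).
    { intros Φ FΦ A B a b. destruct (HFam Φ FΦ) as [[_ [_ [_ [h _]]]] _].
      destruct (h A B a b) as [x|x]; [left; exists Φ; auto|right; auto]. }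
    intros A B [[Φ1 [F1 A1]]|a] [[Φ2 [F2 B2]]|b].
    * destruct (Htot Φ1 Φ2 F1 F2) as [s|s].
      -- apply (Hin Φ2 F2); left; auto.
      -- apply (Hin Φ1 F1); left; auto.
    * apply (Hin Φ1 F1); auto.
    * apply (Hin Φ2 F2); auto.
    * right; apply d0; auto.
  + intros u v [Hu Hu'] [Hv Hv'] S [[Φ [FΦ ΦS]]|h].
    * destruct (HFam Φ FΦ) as [[_ [_ [_ [_ h]]]] _]. apply h; [split|split|left; exact ΦS]; auto.
      -- intros T [x|x]; apply Hu'; [left; exists Φ; auto|right; auto].
      -- intros T [x|x]; apply Hv'; [left; exists Φ; auto|right; auto].
    * apply e0; [split|split|exact h]; auto.
- exists (fun S => M S \/ F0 S). split; [exact PM|].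
  intros G PG MG S GS.
  assert (E : (fun S => (M S \/ G S) \/ F0 S) = G).
  { apply functional_extensionality; intro T; apply propositional_extensionality.
    split; [intros [[x|x]|x]; [apply MG; auto | exact x | apply (proj2 PG); exact x]|intros; left; right; auto]. }
  assert (HB := HM (fun S => M S \/ G S)). cbv beta in HB. rewrite E in HB.
  specialize (HB PG (fun T h => or_introl h) S (or_intror GS)). left; exact HB.
Qed.

Lemma ellis F0 : goodF F0 -> exists p, Cl F0 p /\ mult p p = p.
Proof.
intros H0. destruct (maximal_family F0 H0) as [F [[HF HF0] Fmax]].
destruct (goodF_ex F HF) as [p Hp].
assert (Hpu : UF p) by apply Hp.
assert (HFcl : forall u v, Cl F u -> Cl F v -> forall S, F S -> mult u v S) by apply HF.
set (G := fun S => forall q, Cl F q -> mult q p S).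
assert (Himg : forall r, Cl G r -> exists q, Cl F q /\ r = mult q p).
{ intros r [Hr HrG].
  destruct (Hfam_filter F p r HF Hpu Hr) as [h1 [h2 h3]].
  assert (h0 : ~ Hfam F p r (fun _ => False)).
  { intros [F1 [S [f1 [rS hS]]]].
    assert (GnS : G (fun x => ~ S x)).
    { intros q Hq. unfold mult. apply (uf_up q F1); [apply Hq|apply Hq; exact f1|].
      intros a Fa. apply (uf_neg p (fun b => S (op a b)) Hpu). intro Hd. exact (hS a Fa Hd). }
    apply HrG in GnS. apply (uf_neg r S Hr) in GnS. auto. }
  destruct (uf_lemma X _ h1 h0 h2 h3) as [q [Hq Hqs]].
  destruct (Hfam_Cl_inv F p r q HF Hpu Hr (conj Hq Hqs)) as [Cq Eq].
  exists q; split; auto. }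
assert (FG : forall S, F S -> G S).
{ intros S FS q Hq. exact (HFcl q p Hq Hp S FS). }
assert (PG : Pg F0 G).
{ split; [|intros S HS; apply FG, HF0, HS].
  split; [|split; [|split; [|split]]].
  - intros q Hq. apply uf_T, mult_uf; [apply Hq|exact Hpu].
  - intros HG. apply (uf_F (mult p p)); [apply mult_uf; auto|]. exact (HG p Hp).
  - intros A B HA AB q Hq. apply (uf_up (mult q p) A); [apply mult_uf; [apply Hq|auto]|auto|auto].
  - intros A B HA HB q Hq. apply (uf_and (mult q p)); [apply mult_uf; [apply Hq|auto]|auto|auto].
  - intros u v Hu Hv S GS. destruct (Himg u Hu) as [q1 [C1 E1]]. destruct (Himg v Hv) as [q2 [C2 E2]].
    subst u v. rewrite <- mult_assoc. apply GS. apply Cl_mult; auto. apply Cl_mult; auto. }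
assert (GF := Fmax G PG FG).
destruct (Himg p (conj Hpu (fun S GS => proj2 Hp S (GF S GS)))) as [q0 [C0 E0]].
set (K := Hfam F p p).
destruct (Hfam_filter F p p HF Hpu Hpu) as [k1 [k2 k3]].
assert (PK : Pg F0 K).
{ split; [|intros S HS; apply F_in_Hfam; auto].
  split; [exact k1|split; [|split; [exact k2|split; [exact k3|]]]].
  - intros [F1 [S [f1 [pS hS]]]].
    assert (q0S : q0 (D p S)). { change (mult q0 p S). rewrite <- E0. exact pS. }
    destruct (uf_ne q0 _ (proj1 C0) (uf_and q0 _ _ (proj1 C0) (proj2 C0 F1 f1) q0S)) as [a [x y]].
    exact (hS a x y).
  - intros u v Cu Cv S KS.
    destruct (Hfam_Cl_inv F p p u HF Hpu Hpu Cu) as [Fu Eu].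
    destruct (Hfam_Cl_inv F p p v HF Hpu Hpu Cv) as [Fv Ev].
    apply (Hfam_Cl F p p (mult u v) HF Hpu Hpu (Cl_mult F u v HF Fu Fv)); [|exact KS].
    intros T pT. change (mult (mult u v) p T). rewrite mult_assoc, Ev, Eu. exact pT. }
assert (KF := Fmax K PK (F_in_Hfam F p p HF Hpu Hpu)).
destruct (Hfam_Cl_inv F p p p HF Hpu Hpu (conj Hpu (fun S KS => proj2 Hp S (KF S KS)))) as [_ Epp].
exists p. split; [split; [exact Hpu|intros S HS; apply Hp, HF0, HS]|exact Epp].
Qed.
End Alg.
From Stdlib Require Import IndefiniteDescription.

Lemma seq_build (X : Type) (Q : X -> Prop) (R : X -> X -> Prop) a0 : Q a0 ->
  (forall a, Q a -> exists b, Q b /\ R a b) ->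
  exists f : nat -> X, forall n, Q (f n) /\ R (f n) (f (S n)).
Proof.
intros Q0 H.
assert (H' : forall a, exists b, Q a -> Q b /\ R a b).
{ intros a. destruct (classic (Q a)) as [q|q].
  - destruct (H a q) as [b hb]. exists b; auto.
  - exists a; intro; contradiction. }
set (g := fun a => proj1_sig (constructive_indefinite_description _ (H' a))).
assert (Hg : forall a, Q a -> Q (g a) /\ R a (g a)).
{ intros a. unfold g. destruct (constructive_indefinite_description _ (H' a)); simpl; auto. }
set (f := fix f n := match n with O => a0 | S k => g (f k) end).
assert (Qf : forall n, Q (f n)). { induction n; simpl; auto. apply Hg; auto. }
exists f. intros n; split; auto. apply (Hg (f n) (Qf n)).
Qed.

Section Main.
Variable X : Type.
Variable op : X -> X -> X.
Hypothesis Hassoc : associative_op op.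
Hypothesis Hcomm : forall F G : (X -> Prop) -> Prop,
      beta_idempotent op F -> beta_idempotent op G -> beta_commute op F G.

Lemma comm_mult p q : UF X p -> UF X q -> mult X op p p = p -> mult X op q q = q ->
  forall S, mult X op p q S <-> mult X op q p S.
Proof.
intros Hp Hq Ep Eq S.
assert (Ip : beta_idempotent op p).
{ split; [exact Hp|]. intros T. rewrite beta_mult by auto. rewrite Ep. tauto. }
assert (Iq : beta_idempotent op q).
{ split; [exact Hq|]. intros T. rewrite beta_mult by auto. rewrite Eq. tauto. }
rewrite <- beta_mult by auto. rewrite <- beta_mult by auto. apply (Hcomm p q Ip Iq).
Qed.

Lemma prod_inc (f : nat -> X) u v :
  UF X u -> UF X v -> u (fun a => exists n, a = f n) ->
  (forall n, v (fun b => exists m, n < m /\ b = f m)) ->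
  (forall n m, n < m -> op (f n) (f m) = f n) ->
  forall T, mult X op u v T <-> u T.
Proof.
intros Hu Hv Hr Ht Hrel T. unfold mult.
apply (uf_ext X u _ _ _ Hu Hr). intros a [n ->].
rewrite <- (uf_const X v (T (f n)) Hv).
apply (uf_ext X v _ _ _ Hv (Ht n)). intros b [m [nm ->]]. rewrite Hrel by auto. tauto.
Qed.

Lemma prod_dec (f : nat -> X) u v :
  UF X u -> UF X v -> u (fun a => exists n, a = f n) ->
  (forall n, v (fun b => exists m, n < m /\ b = f m)) ->
  (forall n m, n < m -> op (f n) (f m) = f m) ->
  forall T, mult X op u v T <-> v T.
Proof.
intros Hu Hv Hr Ht Hrel T. unfold mult.
rewrite <- (uf_const X u (v T) Hu).
apply (uf_ext X u _ _ _ Hu Hr). intros a [n ->].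
apply (uf_ext X v _ _ _ Hv (Ht n)). intros b [m [nm ->]]. rewrite Hrel by auto. tauto.
Qed.

Lemma seq_uf (f : nat -> X) (k : nat) : exists u, UF X u /\
  u (fun a => exists n, a = f n) /\
  (forall n, u (fun b => exists m, n < m /\ b = f m)) /\
  u (fun b => exists m, b = f (2 * m + k)).
Proof.
set (Fm := fun T : X -> Prop => exists N, forall m, N <= m -> T (f (2 * m + k))).
destruct (uf_lemma X Fm) as [u [Hu Hus]].
- exists 0; auto.
- intros [N HN]. apply (HN N). lia.
- intros A B [N HN] AB. exists N; auto.
- intros A B [N HN] [M HM]. exists (N + M). intros m hm. split; [apply HN|apply HM]; lia.
- exists u. split; [exact Hu|split; [|split]].
  + apply Hus. exists 0. intros m _. eauto.
  + intros n. apply Hus. exists (S n). intros m hm. exists (2 * m + k). split; [lia|auto].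
  + apply Hus. exists 0. intros m _. eauto.
Qed.

Lemma linear_contra (f : nat -> X) :
  (forall n m, n < m -> f n <> f m) ->
  (forall n m, n < m -> op (f n) (f m) = f n) \/ (forall n m, n < m -> op (f n) (f m) = f m) ->
  False.
Proof.
intros Hinj Hrel.
destruct (seq_uf f 0) as [u0 [U0 [R0 [T0 E0]]]].
destruct (seq_uf f 1) as [u1 [U1 [R1 [T1 E1]]]].
assert (Hdisj : forall b, (exists m, b = f (2 * m + 0)) -> (exists m, b = f (2 * m + 1)) -> False).
{ intros b [m ->] [m' E]. destruct (Nat.lt_total (2 * m + 0) (2 * m' + 1)) as [h|[h|h]].
  - exact (Hinj _ _ h E).
  - lia.
  - exact (Hinj _ _ h (eq_sym E)). }
assert (Hu1E0 : u1 (fun b => exists m, b = f (2 * m + 0))).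
{ destruct Hrel as [Hr|Hr].
  - assert (I0 : mult X op u0 u0 = u0).
    { apply uf_eq; [apply mult_uf; auto|auto|]. intros T. apply (prod_inc f); auto. }
    assert (I1 : mult X op u1 u1 = u1).
    { apply uf_eq; [apply mult_uf; auto|auto|]. intros T. apply (prod_inc f); auto. }
    apply (prod_inc f u1 u0); auto. apply (comm_mult u0 u1); auto. apply (prod_inc f u0 u1); auto.
  - assert (I0 : mult X op u0 u0 = u0).
    { apply uf_eq; [apply mult_uf; auto|auto|]. intros T. apply (prod_dec f); auto. }
    assert (I1 : mult X op u1 u1 = u1).
    { apply uf_eq; [apply mult_uf; auto|auto|]. intros T. apply (prod_dec f); auto. }
    apply (prod_dec f u0 u1); auto. apply (comm_mult u0 u1); auto. apply (prod_dec f u1 u0); auto. }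
destruct (uf_ne X u1 _ U1 (uf_and X u1 _ _ U1 Hu1E0 E1)) as [b [h1 h2]].
exact (Hdisj b h1 h2).
Qed.
Lemma chain_inc (f : nat -> X) : (forall n, op (f n) (f (S n)) = f n) ->
  forall n k, op (f n) (f (n + S k)) = f n.
Proof.
intros H n k. induction k.
- rewrite Nat.add_1_r. apply H.
- replace (n + S (S k)) with (S (n + S k)) by lia.
  rewrite <- IHk at 1. rewrite <- Hassoc. rewrite H. exact IHk.
Qed.

Lemma chain_dec (f : nat -> X) : (forall n, op (f n) (f (S n)) = f (S n)) ->
  forall n k, op (f n) (f (n + S k)) = f (n + S k).
Proof.
intros H n k. induction k.
- rewrite Nat.add_1_r. apply H.
- replace (n + S (S k)) with (S (n + S k)) by lia.
  rewrite <- (H (n + S k)) at 1. rewrite Hassoc. rewrite IHk. apply H.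
Qed.

Lemma lt_split n m : n < m -> exists k, m = n + S k.
Proof. intros h. exists (m - S n). lia. Qed.

Lemma linear_case (W : X -> Prop) : linear_set op W -> finite_set W.
Proof.
intros Hlin. apply NNPP; intro Hinf.
assert (Hidem : forall x, W x -> op x x = x).
{ intros x Sx; destruct (Hlin x x Sx Sx); auto. }
assert (Hc : forall x y, W x -> W y -> op x y = op y x).
{ intros x y Sx Sy.
  assert (Ix : mult X op (pr X x) (pr X x) = pr X x).
  { unfold mult, pr. rewrite (Hidem x Sx). reflexivity. }
  assert (Iy : mult X op (pr X y) (pr X y) = pr X y).
  { unfold mult, pr. rewrite (Hidem y Sy). reflexivity. }
  assert (E := comm_mult _ _ (pr_uf X x) (pr_uf X y) Ix Iy (fun z => z = op x y)).
  unfold mult, pr in E. symmetry. apply E. reflexivity. }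
set (Fc := fun T : X -> Prop => exists l : list X, forall z, W z -> ~ In z l -> T z).
destruct (uf_lemma X Fc) as [p [Hp Hps]].
- exists nil; auto.
- intros [l Hl]. apply Hinf. exists l. intros z Sz. apply NNPP; intro N. exact (Hl z Sz N).
- intros A B [l Hl] AB. exists l; auto.
- intros A B [l1 H1] [l2 H2]. exists (l1 ++ l2). intros z Sz N.
  split; [apply H1|apply H2]; auto; intro; apply N; apply in_or_app; auto.
- assert (pS : forall a, p (fun z => W z /\ z <> a)).
  { intros a. apply Hps. exists (a :: nil). intros z Sz N. split; auto. intro e; apply N; left; auto. }
  assert (pS0 : p W). { apply Hps. exists nil. auto. }
  set (U := fun a => p (fun b => op a b = a)).
  assert (Hfin : forall f : nat -> X, (forall n, W (f n) /\ f (S n) <> f n) ->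
     ((forall n, op (f n) (f (S n)) = f n) \/ (forall n, op (f n) (f (S n)) = f (S n))) -> False).
  { intros f Hf Hr. apply (linear_contra f).
    - intros n m nm E. destruct (lt_split n m nm) as [k ->]. destruct k as [|k].
      + rewrite Nat.add_1_r in E. apply (proj2 (Hf n)). auto.
      + destruct Hr as [Hr|Hr].
        * pose proof (chain_inc f Hr (S n) k) as C. replace (S n + S k) with (n + S (S k)) in C by lia.
          rewrite <- E in C. rewrite Hc in C by apply Hf. rewrite Hr in C. apply (proj2 (Hf n)). auto.
        * pose proof (chain_inc f) as _.
          pose proof (chain_dec f Hr (S n) k) as C. replace (S n + S k) with (n + S (S k)) in C by lia.
          rewrite <- E in C. rewrite Hc in C by apply Hf. rewrite Hr in C. apply (proj2 (Hf n)). auto.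
    - destruct Hr as [Hr|Hr]; [left|right]; intros n m nm; destruct (lt_split n m nm) as [k ->].
      + apply chain_inc; auto.
      + apply chain_dec; auto. }
  destruct (uf_cases X p U Hp) as [pU|pU].
  + destruct (uf_ne X p _ Hp (uf_and X p _ _ Hp pS0 pU)) as [a0 [Sa0 Ua0]].
    destruct (seq_build X (fun a => W a /\ U a) (fun a b => op a b = a /\ b <> a) a0) as [f Hf]; auto.
    * intros a [Sa Ua].
      destruct (uf_ne X p _ Hp (uf_and X p _ _ Hp (uf_and X p _ _ Hp (pS a) pU) Ua)) as [b [[[Sb nb] Ub] Eb]].
      exists b; auto.
    * apply (Hfin f); [intros n; split; apply Hf|left; intros n; apply Hf].
  + destruct (uf_ne X p _ Hp (uf_and X p _ _ Hp pS0 pU)) as [a0 [Sa0 Ua0]].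
    destruct (seq_build X (fun a => W a /\ ~ U a) (fun a b => op a b = b /\ b <> a) a0) as [f Hf]; auto.
    * intros a [Sa Ua]. apply (uf_neg X p (fun b => op a b = a) Hp) in Ua.
      destruct (uf_ne X p _ Hp (uf_and X p _ _ Hp (uf_and X p _ _ Hp (pS a) pU) Ua)) as [b [[[Sb nb] Ub] Eb]].
      exists b. split; auto. split; auto. destruct (Hlin a b Sa Sb); tauto.
    * apply (Hfin f); [intros n; split; apply Hf|right; intros n; apply Hf].
Qed.
Lemma npow_add x a b : npow op x (a + b + 1) = op (npow op x a) (npow op x b).
Proof.
induction b.
- rewrite Nat.add_0_r, Nat.add_1_r. reflexivity.
- replace (a + S b + 1) with (S (a + b + 1)) by lia. simpl. rewrite IHb. rewrite <- Hassoc. reflexivity.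
Qed.

Lemma npow_period x i j : i < j -> npow op x i = npow op x j ->
  forall k, npow op x (i + k + (j - i)) = npow op x (i + k).
Proof.
intros ij E k. induction k.
- rewrite Nat.add_0_r. replace (i + (j - i)) with j by lia. auto.
- replace (i + S k + (j - i)) with (S (i + k + (j - i))) by lia.
  replace (i + S k) with (S (i + k)) by lia. simpl. rewrite IHk. reflexivity.
Qed.

Lemma npow_bound x i j : i < j -> npow op x i = npow op x j ->
  forall n, exists k, k < j /\ npow op x n = npow op x k.
Proof.
intros ij E n. induction n as [n IH] using (well_founded_induction lt_wf).
destruct (Nat.lt_ge_cases n j) as [h|h].
- exists n; auto.
- destruct (IH (n - (j - i))) as [k [hk Ek]]; [lia|].
  exists k. split; auto. rewrite <- Ek.
  pose proof (npow_period x i j ij E (n - (j - i) - i)) as P.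
  replace (i + (n - (j - i) - i) + (j - i)) with n in P by lia.
  replace (i + (n - (j - i) - i)) with (n - (j - i)) in P by lia. exact P.
Qed.

Definition Hk (k e : nat) := exists c, e = 2 ^ k * c.
Definition Li (i e : nat) := exists m j, e = 2 ^ (2 * m + i) * (2 * j + 1).

Lemma pow2_pos k : 0 < 2 ^ k.
Proof. induction k; simpl; lia. Qed.

Lemma Hk_mono k K e : Hk K e -> k <= K -> Hk k e.
Proof. intros [c ->] h. exists (2 ^ (K - k) * c). replace K with (k + (K - k)) at 1 by lia.
rewrite Nat.pow_add_r. ring. Qed.

Lemma Hk_add k e1 e2 : Hk k e1 -> Hk k e2 -> Hk k (e1 + e2).
Proof. intros [c1 ->] [c2 ->]. exists (c1 + c2). ring. Qed.

Lemma Li_add v j e2 : Hk (v + 1) e2 -> exists j', 2 ^ v * (2 * j + 1) + e2 = 2 ^ v * (2 * j' + 1).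
Proof. intros [c ->]. exists (j + c). rewrite Nat.pow_add_r. simpl. ring. Qed.

Lemma pow2_odd_inj a b j l : 2 ^ a * (2 * j + 1) = 2 ^ b * (2 * l + 1) -> a = b.
Proof.
revert b. induction a; intros b E; destruct b; auto.
- rewrite Nat.pow_succ_r', Nat.pow_0_r in E. rewrite <- Nat.mul_assoc in E.
  remember (2 ^ b * (2 * l + 1)) as t. lia.
- rewrite Nat.pow_succ_r', Nat.pow_0_r in E. rewrite <- Nat.mul_assoc in E.
  remember (2 ^ a * (2 * j + 1)) as t. lia.
- rewrite !Nat.pow_succ_r' in E. rewrite <- !Nat.mul_assoc in E. f_equal. apply IHa. lia.
Qed.

Lemma Li_disj e : Li 0 e -> Li 1 e -> False.
Proof. intros [m [j E1]] [m' [j' E2]]. rewrite E1 in E2. apply pow2_odd_inj in E2. lia. Qed.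

Lemma cyclic_case (W : X -> Prop) : cyclic_set op W -> finite_set W.
Proof.
intros [x [Wx HW]].
destruct (classic (exists i j, i < j /\ npow op x i = npow op x j)) as [[i [j [ij E]]]|N].
- exists (map (npow op x) (seq 0 j)). intros y Wy. apply HW in Wy. destruct Wy as [n ->].
  destruct (npow_bound x i j ij E n) as [k [hk ->]]. apply in_map. apply in_seq. lia.
- exfalso.
  assert (Inj : forall n n', npow op x n = npow op x n' -> n = n').
  { intros n n' E. destruct (Nat.lt_total n n') as [h|[h|h]]; auto; exfalso; apply N; eauto. }
  set (img := fun (Q : nat -> Prop) (y : X) => exists n, y = npow op x n /\ Q (S n)).
  set (F0 := fun (i : nat) (T : X -> Prop) => exists k, forall y, img (fun e => Hk k e /\ Li i e) y -> T y).
  assert (Key : forall i u v, UF X u -> UF X v -> (forall T, F0 i T -> u T) ->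
             (forall K, v (img (Hk K))) ->
             forall k, mult X op u v (img (fun e => Hk k e /\ Li i e))).
  { intros i u v Hu Hv Fu Kv k. unfold mult.
    apply (uf_up X u (img (fun e => Hk k e /\ Li i e))); [exact Hu| apply Fu; exists k; auto|].
    intros a [n [-> [hk [m [j Ej]]]]].
    apply (uf_up X v (img (Hk (k + (2 * m + i + 1))))); [exact Hv|apply Kv|].
    intros b [n' [-> hK]].
    exists (n + n' + 1). rewrite npow_add. split; [reflexivity|].
    replace (S (n + n' + 1)) with (S n + S n') by lia. split.
    - apply Hk_add; auto. apply (Hk_mono _ _ _ hK). lia.
    - destruct (Li_add (2 * m + i) j (S n')) as [j' Ej'].
      + apply (Hk_mono _ _ _ hK). lia.
      + exists m, j'. rewrite Ej. exact Ej'. }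
  assert (G : forall i, goodF X op (F0 i)).
  { intros i. split; [|split; [|split; [|split]]].
    - exists 0; auto.
    - intros [k Hk0]. apply (Hk0 (npow op x (2 ^ (2 * k + i) - 1))).
      pose proof (pow2_pos (2 * k + i)).
      exists (2 ^ (2 * k + i) - 1). split; [reflexivity|].
      replace (S (2 ^ (2 * k + i) - 1)) with (2 ^ (2 * k + i)) by lia. split.
      + exists (2 ^ (k + i)). rewrite <- Nat.pow_add_r. f_equal. lia.
      + exists k, 0. ring.
    - intros A B [k HA] AB. exists k; auto.
    - intros A B [k1 H1] [k2 H2]. exists (k1 + k2). intros y [n [-> [hk hl]]].
      split; [apply H1|apply H2]; exists n; (split; [reflexivity|split; auto]);
        apply (Hk_mono _ _ _ hk); lia.
    - intros u v [Hu Fu] [Hv Fv] T [k HT].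
      apply (uf_up X (mult X op u v) (img (fun e => Hk k e /\ Li i e))); [apply mult_uf; auto| |exact HT].
      apply Key; auto. intros K. apply Fv. exists K. intros y [n [-> [h _]]]. exists n; auto. }
  destruct (ellis X op Hassoc (F0 0) (G 0)) as [p0 [[U0 C0] I0]].
  destruct (ellis X op Hassoc (F0 1) (G 1)) as [p1 [[U1 C1] I1]].
  assert (Kv : forall i p, (forall T, F0 i T -> p T) -> forall K, p (img (Hk K))).
  { intros i p Fp K. apply Fp. exists K. intros y [n [-> [h _]]]. exists n; auto. }
  assert (A0 : mult X op p0 p1 (img (Li 0))).
  { apply (uf_up X _ _ _ (mult_uf X op p0 p1 U0 U1) (Key 0 p0 p1 U0 U1 C0 (Kv 1 p1 C1) 0)).
    intros y [n [-> [_ h]]]. exists n; auto. }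
  assert (A1 : mult X op p1 p0 (img (Li 1))).
  { apply (uf_up X _ _ _ (mult_uf X op p1 p0 U1 U0) (Key 1 p1 p0 U1 U0 C1 (Kv 0 p0 C0) 0)).
    intros y [n [-> [_ h]]]. exists n; auto. }
  apply (comm_mult p0 p1 U0 U1 I0 I1) in A0.
  destruct (uf_ne X _ _ (mult_uf X op p1 p0 U1 U0) (uf_and X _ _ _ (mult_uf X op p1 p0 U1 U0) A0 A1))
    as [y [[n [-> h0]] [n' [E h1]]]].
  apply Inj in E. subst n'. exact (Li_disj _ h0 h1).
Qed.
End Main.

Theorem proposition2p1 (X : Type) (op : X -> X -> X)
  (Hassoc : associative_op op)
  (Hcomm : forall F G : (X -> Prop) -> Prop,
      beta_idempotent op F -> beta_idempotent op G -> beta_commute op F G) :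
  (forall S : X -> Prop, subsemigroup op S -> cyclic_set op S -> finite_set S) /\
  (forall S : X -> Prop, subsemigroup op S -> linear_set op S -> finite_set S).
Proof.
split.
- intros S _ HS. exact (cyclic_case X op Hassoc Hcomm S HS).
- intros S _ HS. exact (linear_case X op Hassoc Hcomm S HS).
Qed.
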